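(* Let $\gamma$ be an isophotic curve on a smooth oriented surface $M\subset E^3$ with $k_g\equiv 0$, nowhere-vanishing normal curvature, and whose position vector always lies in the plane spanned by $\{T,V\}$. Then $\gamma$ is a slant helix if and only if $\gamma$ is a rectifying curve.
   Context: For a unit speed curve $\gamma$ on an oriented surface $M\subset E^3$, the Darboux frame is $T=\gamma'$, $U$ = unit normal of $M$ along $\gamma$, $V = U\times T$, satisfying $T' = k_g V + k_n U$, $V' = -k_g T + \tau_g U$, $U' = -k_n T - \tau_g V$; here $k_g$, $k_n$, $\tau_g$ are the geodesic curvature, normal curvature and geodesic torsion. The curve $\gamma$ is an isophotic curve if there is a fixed unit vector $d$ and a constant angle $\phi$ with $\langle U, d\rangle = \cos\phi$ along $\gamma$. ''Position vector lies in the plane spanned by $\{T,V\}$'' means $\gamma(s) = \mu_1(s)T(s) + \mu_2(s)V(s)$ for differentiable functions $\mu_1,\mu_2$. With Frenet frame $\{T,N,B\}$, curvature $\kappa>0$ and torsion $\tau$: $\gamma$ is a slant helix if its principal normal $N$ makes a constant angle with a fixed direction (equivalently, $\frac{\kappa^2}{(\kappa^2+\tau^2)^{3/2}}(\tau/\kappa)'$ is constant); $\gamma$ is a rectifying curve if its position vector always lies in its rectifying plane $\mathrm{span}\{T,B\}$ (equivalently, $\tau/\kappa = c_1 s + c_2$ for constants $c_1\neq 0$, $c_2$). *)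

(* Defs.v *)
From Stdlib Require Import Reals.
From Coquelicot Require Import Coquelicot.
Open Scope R_scope.

Definition vec := (R * R * R)%type.
Definition vx (v : vec) : R := fst (fst v).
Definition vy (v : vec) : R := snd (fst v).
Definition vz (v : vec) : R := snd v.

Definition vadd (u v : vec) : vec := (vx u + vx v, vy u + vy v, vz u + vz v).
Definition vscale (c : R) (v : vec) : vec := (c * vx v, c * vy v, c * vz v).
Definition dot (u v : vec) : R := vx u * vx v + vy u * vy v + vz u * vz v.
Definition cross (u v : vec) : vec :=
  (vy u * vz v - vz u * vy v, vz u * vx v - vx u * vz v, vx u * vy v - vy u * vx v).
Definition vnorm (v : vec) : R := sqrt (dot v v).

Definition Dv (f : R -> vec) (s : R) : vec :=
  (Derive (fun t => vx (f t)) s, Derive (fun t => vy (f t)) s,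
   Derive (fun t => vz (f t)) s).

Definition smooth_fun_on (a b : R) (f : R -> R) : Prop :=
  forall (k : nat) (s : R), a < s < b -> ex_derive (Derive_n f k) s.

Definition smooth_on (a b : R) (f : R -> vec) : Prop :=
  smooth_fun_on a b (fun t => vx (f t)) /\
  smooth_fun_on a b (fun t => vy (f t)) /\
  smooth_fun_on a b (fun t => vz (f t)).

Definition Tf (gamma : R -> vec) : R -> vec := Dv gamma.
Definition Nf (gamma : R -> vec) (s : R) : vec :=
  vscale (/ vnorm (Dv (Tf gamma) s)) (Dv (Tf gamma) s).
Definition Bf (gamma : R -> vec) (s : R) : vec := cross (Tf gamma s) (Nf gamma s).

Definition Vf (gamma U : R -> vec) (s : R) : vec := cross (U s) (Tf gamma s).
Definition geod_curv (gamma U : R -> vec) (s : R) : R :=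
  dot (Dv (Tf gamma) s) (Vf gamma U s).
Definition normal_curv (gamma U : R -> vec) (s : R) : R :=
  dot (Dv (Tf gamma) s) (U s).

(** Unit-speed curve on (a,b), lying on an oriented surface with unit normal
    field U along it (U smooth, unit, orthogonal to T). *)
Definition unit_speed_on (a b : R) (gamma : R -> vec) : Prop :=
  forall s, a < s < b -> vnorm (Tf gamma s) = 1.

Definition surface_normal_along (a b : R) (gamma U : R -> vec) : Prop :=
  smooth_on a b U /\
  forall s, a < s < b -> vnorm (U s) = 1 /\ dot (U s) (Tf gamma s) = 0.

Definition isophotic (a b : R) (gamma U : R -> vec) : Prop :=
  exists (d : vec) (phi : R), vnorm d = 1 /\
    forall s, a < s < b -> dot (U s) d = cos phi.

Definition position_in_TV_plane (a b : R) (gamma U : R -> vec) : Prop :=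
  exists mu1 mu2 : R -> R,
    (forall s, a < s < b -> ex_derive mu1 s /\ ex_derive mu2 s) /\
    forall s, a < s < b ->
      gamma s = vadd (vscale (mu1 s) (Tf gamma s)) (vscale (mu2 s) (Vf gamma U s)).

Definition slant_helix (a b : R) (gamma : R -> vec) : Prop :=
  exists (d : vec) (theta : R), vnorm d = 1 /\
    forall s, a < s < b -> dot (Nf gamma s) d = cos theta.

Definition rectifying (a b : R) (gamma : R -> vec) : Prop :=
  forall s, a < s < b -> exists l1 l2 : R,
    gamma s = vadd (vscale l1 (Tf gamma s)) (vscale l2 (Bf gamma s)).

(* Main.v *)
Require Import Defs.
From Stdlib Require Import Reals Ranalysis5 Lra Psatz.
From Coquelicot Require Import Coquelicot.
Open Scope R_scope.

Lemma par_lemma (T U w : vec) :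
  dot T T = 1 -> dot U U = 1 -> dot T U = 0 -> dot w T = 0 ->
  dot w (cross U T) = 0 -> w = vscale (dot w U) U.
Proof.
  destruct T as [[t1 t2] t3], U as [[u1 u2] u3], w as [[w1 w2] w3].
  unfold dot, cross, vscale, vx, vy, vz; simpl. intros H1 H2 H3 H4 H5.
  set (c := w1*u1 + w2*u2 + w3*u3).
  set (x1 := w1 - c*u1). set (x2 := w2 - c*u2). set (x3 := w3 - c*u3).
  assert (A1 : x1*t1+x2*t2+x3*t3 = 0).
  { transitivity ((w1*t1+w2*t2+w3*t3) - c*(t1*u1+t2*u2+t3*u3)); [unfold x1,x2,x3; ring|].
    rewrite H4, H3; ring. }
  assert (A2 : x1*u1+x2*u2+x3*u3 = 0).
  { transitivity (c - c*(u1*u1+u2*u2+u3*u3)); [unfold x1,x2,x3,c; ring|].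
    rewrite H2; ring. }
  assert (A3 : x1 * (u2 * t3 - u3 * t2) + x2 * (u3 * t1 - u1 * t3) + x3 * (u1 * t2 - u2 * t1) = 0).
  { transitivity ((w1 * (u2 * t3 - u3 * t2) + w2 * (u3 * t1 - u1 * t3) + w3 * (u1 * t2 - u2 * t1)) - 0);
    [unfold x1,x2,x3; ring| rewrite H5; ring]. }
  assert (G : (x1 * (u2 * t3 - u3 * t2) + x2 * (u3 * t1 - u1 * t3) + x3 * (u1 * t2 - u2 * t1))^2 =
     (t1*t1+t2*t2+t3*t3)*(u1*u1+u2*u2+u3*u3)*(x1*x1+x2*x2+x3*x3)
     + 2*(t1*u1+t2*u2+t3*u3)*(u1*x1+u2*x2+u3*x3)*(x1*t1+x2*t2+x3*t3)
     - (t1*t1+t2*t2+t3*t3)*(u1*x1+u2*x2+u3*x3)^2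
     - (u1*u1+u2*u2+u3*u3)*(x1*t1+x2*t2+x3*t3)^2
     - (x1*x1+x2*x2+x3*x3)*(t1*u1+t2*u2+t3*u3)^2) by ring.
  rewrite A3, H1, H2, A1 in G.
  replace (t1*u1+t2*u2+t3*u3) with 0 in G by lra.
  replace (u1*x1+u2*x2+u3*x3) with 0 in G by lra.
  assert (Z : x1*x1+x2*x2+x3*x3 = 0) by nra.
  assert (x1 = 0) by nra. assert (x2 = 0) by nra. assert (x3 = 0) by nra.
  unfold x1,x2,x3 in *. f_equal; [f_equal|]; lra.
Qed.

Lemma dot1_of_norm (v : vec) : vnorm v = 1 -> dot v v = 1.
Proof.
  unfold vnorm. intro H.
  assert (P : 0 <= dot v v) by (destruct v as [[x y] z]; unfold dot, vx, vy, vz; simpl; nra).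
  rewrite <- (sqrt_sqrt _ P), H. ring.
Qed.

Lemma loc_int (a b s : R) : a < s < b -> locally s (fun t => a < t < b).
Proof.
  intro H. apply (open_and (fun t => a < t) (fun t => t < b)); [apply open_gt|apply open_lt|exact H].
Qed.

Lemma smooth_d1 (a b : R) (f : R -> R) s : smooth_fun_on a b f -> a < s < b -> ex_derive f s.
Proof. intros H Hs. exact (H 0%nat s Hs). Qed.
Lemma smooth_d2 (a b : R) (f : R -> R) s : smooth_fun_on a b f -> a < s < b -> ex_derive (Derive f) s.
Proof. intros H Hs. exact (H 1%nat s Hs). Qed.
Lemma smooth_d3 (a b : R) (f : R -> R) s : smooth_fun_on a b f -> a < s < b ->
  ex_derive (fun t => Derive (Derive f) t) s.
Proof. intros H Hs. exact (H 2%nat s Hs). Qed.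

Lemma deriv_sq3 (p q r : R -> R) s dp dq dr :
  is_derive p s dp -> is_derive q s dq -> is_derive r s dr ->
  is_derive (fun t => p t * p t + q t * q t + r t * r t) s (2 * (dp * p s + dq * q s + dr * r s)).
Proof.
  intros Hp Hq Hr.
  assert (H := is_derive_plus _ _ _ _ _ (is_derive_plus _ _ _ _ _ (is_derive_mult _ _ _ _ _ Hp Hp (fun _ _ => Rmult_comm _ _))
     (is_derive_mult _ _ _ _ _ Hq Hq (fun _ _ => Rmult_comm _ _))) (is_derive_mult _ _ _ _ _ Hr Hr (fun _ _ => Rmult_comm _ _))).
  simpl in H. unfold plus, mult in H; simpl in H.
  replace (2 * (dp * p s + dq * q s + dr * r s)) with
    (dp * p s + p s * dp + (dq * q s + q s * dq) + (dr * r s + r s * dr)) by ring.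
  exact H.
Qed.

Lemma TT'0 (a b : R) (gamma : R -> vec) s :
  smooth_on a b gamma -> unit_speed_on a b gamma -> a < s < b ->
  dot (Dv (Tf gamma) s) (Tf gamma s) = 0.
Proof.
  intros [Hx [Hy Hz]] Hu Hs.
  set (fx := fun t => vx (gamma t)). set (fy := fun t => vy (gamma t)). set (fz := fun t => vz (gamma t)).
  change (Derive (Derive fx) s * Derive fx s + Derive (Derive fy) s * Derive fy s
          + Derive (Derive fz) s * Derive fz s = 0).
  assert (D1 := deriv_sq3 _ _ _ s _ _ _ (Derive_correct _ _ (smooth_d2 _ _ _ _ Hx Hs))
     (Derive_correct _ _ (smooth_d2 _ _ _ _ Hy Hs)) (Derive_correct _ _ (smooth_d2 _ _ _ _ Hz Hs))).
  assert (D2 : is_derive (fun t => Derive fx t * Derive fx t + Derive fy t * Derive fy t + Derive fz t * Derive fz t) s 0).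
  { apply (is_derive_ext_loc (fun _ => 1)).
    - apply (filter_imp (fun t => a < t < b)); [|apply loc_int; exact Hs].
      intros t Ht. symmetry. exact (dot1_of_norm _ (Hu t Ht)).
    - exact (is_derive_const (K:=R_AbsRing) (V:=R_NormedModule) 1 s). }
  assert (E := eq_trans (eq_sym (is_derive_unique _ _ _ D1)) (is_derive_unique _ _ _ D2)).
  unfold fx, fy, fz. lra.
Qed.

Lemma dot_comm u v : dot u v = dot v u.
Proof. unfold dot; ring. Qed.

Lemma Tp_eq (a b : R) (gamma U : R -> vec) s :
  smooth_on a b gamma -> unit_speed_on a b gamma -> surface_normal_along a b gamma U ->
  (forall s, a < s < b -> geod_curv gamma U s = 0) -> a < s < b ->
  Dv (Tf gamma) s = vscale (normal_curv gamma U s) (U s).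
Proof.
  intros Hg Hu [_ Hn] Hk Hs. destruct (Hn s Hs) as [H1 H2].
  apply par_lemma with (T := Tf gamma s).
  - exact (dot1_of_norm _ (Hu s Hs)).
  - exact (dot1_of_norm _ H1).
  - rewrite dot_comm; exact H2.
  - exact (TT'0 a b gamma s Hg Hu Hs).
  - exact (Hk s Hs).
Qed.

Lemma vnorm_scale_unit c v : dot v v = 1 -> vnorm (vscale c v) = Rabs c.
Proof.
  intro H. unfold vnorm. replace (dot (vscale c v) (vscale c v)) with (Rsqr c * dot v v).
  - rewrite H, Rmult_1_r. apply sqrt_Rsqr_abs.
  - destruct v as [[x y] z]; unfold dot, vscale, vx, vy, vz, Rsqr; simpl; ring.
Qed.

Lemma N_eq (a b : R) (gamma U : R -> vec) s :
  smooth_on a b gamma -> unit_speed_on a b gamma -> surface_normal_along a b gamma U ->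
  (forall s, a < s < b -> geod_curv gamma U s = 0) -> a < s < b ->
  Nf gamma s = vscale (normal_curv gamma U s / Rabs (normal_curv gamma U s)) (U s).
Proof.
  intros Hg Hu HU Hk Hs. unfold Nf. rewrite (Tp_eq a b gamma U s Hg Hu HU Hk Hs).
  destruct HU as [_ Hn]. destruct (Hn s Hs) as [H1 _].
  rewrite (vnorm_scale_unit _ _ (dot1_of_norm _ H1)).
  destruct (U s) as [[x y] z]; unfold vscale, vx, vy, vz; simpl. unfold Rdiv.
  f_equal; [f_equal|]; ring.
Qed.

Lemma sgn_sq k : k <> 0 -> (k / Rabs k) * (k / Rabs k) = 1.
Proof.
  intro H. assert (Rabs k <> 0) by (apply Rabs_no_R0; exact H).
  replace (k / Rabs k * (k / Rabs k)) with (Rsqr k / Rsqr (Rabs k)) by (unfold Rsqr; field; auto).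
  rewrite <- Rsqr_abs. field. unfold Rsqr; intro C; apply H; nra.
Qed.

Lemma V_as_B T Uv c : c * c = 1 -> cross Uv T = vscale (- c) (cross T (vscale c Uv)).
Proof.
  intro H. destruct T as [[t1 t2] t3], Uv as [[u1 u2] u3].
  unfold cross, vscale, vx, vy, vz; simpl.
  f_equal; [f_equal|].
  - transitivity ((c*c) * (u2 * t3 - u3 * t2)); [rewrite H; ring | ring].
  - transitivity ((c*c) * (u3 * t1 - u1 * t3)); [rewrite H; ring | ring].
  - transitivity ((c*c) * (u1 * t2 - u2 * t1)); [rewrite H; ring | ring].
Qed.

Lemma kn_cont (a b : R) (gamma U : R -> vec) s :
  smooth_on a b gamma -> surface_normal_along a b gamma U -> a < s < b ->
  continuity_pt (fun t => normal_curv gamma U t) s.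
Proof.
  intros [Hx [Hy Hz]] [[Ux [Uy Uz]] _] Hs.
  apply continuity_pt_filterlim.
  change (continuous (fun t => plus (plus
      (mult (Derive (Derive (fun t => vx (gamma t))) t) (vx (U t)))
      (mult (Derive (Derive (fun t => vy (gamma t))) t) (vy (U t))))
      (mult (Derive (Derive (fun t => vz (gamma t))) t) (vz (U t)))) s).
  apply (continuous_plus (K:=R_AbsRing) (V:=R_NormedModule)); [apply (continuous_plus (K:=R_AbsRing) (V:=R_NormedModule))|].
  all: apply (continuous_mult (K:=R_AbsRing)); apply (ex_derive_continuous (K:=R_AbsRing) (V:=R_NormedModule)).
  - exact (smooth_d3 _ _ _ _ Hx Hs).
  - exact (smooth_d1 _ _ _ _ Ux Hs).
  - exact (smooth_d3 _ _ _ _ Hy Hs).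
  - exact (smooth_d1 _ _ _ _ Uy Hs).
  - exact (smooth_d3 _ _ _ _ Hz Hs).
  - exact (smooth_d1 _ _ _ _ Uz Hs).
Qed.

Lemma const_sign (a b : R) (f : R -> R) :
  (forall s, a < s < b -> continuity_pt f s) -> (forall s, a < s < b -> f s <> 0) ->
  forall s t, a < s < b -> a < t < b -> 0 < f s * f t.
Proof.
  intros Hc Hn.
  assert (K : forall s t, a < s < b -> a < t < b -> s < t -> 0 < f s * f t).
  { intros s t Hs Ht Hst.
    assert (Cs := Hn s Hs). assert (Ct := Hn t Ht).
    destruct (Rlt_or_le 0 (f s * f t)) as [P|P]; [exact P|exfalso].
    assert (Hc' : forall x, s <= x <= t -> a < x < b) by (intros; lra).
    destruct (Rlt_or_le (f s) 0) as [N1|N1].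
    - assert (0 < f t) by (destruct (Rlt_or_le 0 (f t)); [auto| exfalso; nra]).
      destruct (IVT_interv f s t (fun x Hx => Hc x (Hc' x Hx)) Hst N1 H) as [z [Hz Fz]].
      exact (Hn z (Hc' z Hz) Fz).
    - assert (0 < f s) by (destruct N1; [auto|congruence]).
      assert (f t < 0) by (destruct (Rlt_or_le (f t) 0); [auto| exfalso; nra]).
      assert (Ho : forall x, s <= x <= t -> continuity_pt (fun y => - f y) x).
      { intros x Hx. apply (continuity_pt_opp f). exact (Hc x (Hc' x Hx)). }
      destruct (IVT_interv (fun y => - f y) s t Ho Hst ltac:(lra) ltac:(lra)) as [z [Hz Fz]].
      apply (Hn z (Hc' z Hz)). lra. }
  intros s t Hs Ht.
  destruct (Rtotal_order s t) as [L|[E|G]].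
  - exact (K s t Hs Ht L).
  - subst. assert (W := Hn t Ht). assert (0 < f t * f t) by (apply Rsqr_pos_lt; exact W). lra.
  - rewrite Rmult_comm. exact (K t s Ht Hs G).
Qed.

Theorem theorem4p4 (a b : R) (gamma U : R -> vec) :
  a < b ->
  smooth_on a b gamma ->
  unit_speed_on a b gamma ->
  surface_normal_along a b gamma U ->
  isophotic a b gamma U ->
  (forall s, a < s < b -> geod_curv gamma U s = 0) ->
  (forall s, a < s < b -> normal_curv gamma U s <> 0) ->
  position_in_TV_plane a b gamma U ->
  (slant_helix a b gamma <-> rectifying a b gamma).
Proof.
  intros Hab Hg Hu HU Hiso Hkg Hkn Hpos.
  set (k := fun t => normal_curv gamma U t).
  set (c := fun t => k t / Rabs (k t)).
  assert (HN : forall s, a < s < b -> Nf gamma s = vscale (c s) (U s))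
    by (intros s Hs; exact (N_eq a b gamma U s Hg Hu HU Hkg Hs)).
  assert (Hc2 : forall s, a < s < b -> c s * c s = 1) by (intros s Hs; apply sgn_sq, Hkn, Hs).
  split; intros _.
  - intros s Hs. destruct Hpos as [mu1 [mu2 [_ Hp]]].
    exists (mu1 s), (- c s * mu2 s).
    rewrite (Hp s Hs). unfold Bf. rewrite (HN s Hs). unfold Vf.
    rewrite (V_as_B (Tf gamma s) (U s) (c s) (Hc2 s Hs)).
    destruct (cross (Tf gamma s) (vscale (c s) (U s))) as [[x y] z].
    destruct (Tf gamma s) as [[p q] r].
    unfold vadd, vscale, vx, vy, vz; simpl. f_equal; [f_equal|]; ring.
  - destruct Hiso as [d [phi [Hd Hdp]]].
    set (s0 := (a + b) / 2). assert (Hs0 : a < s0 < b) by (unfold s0; lra).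
    assert (Hsg : forall s, a < s < b -> c s = c s0).
    { intros s Hs.
      assert (P := const_sign a b k (fun t Ht => kn_cont a b gamma U t Hg HU Ht) Hkn s s0 Hs Hs0).
      unfold c. assert (k s <> 0) by (apply Hkn; exact Hs). assert (k s0 <> 0) by (apply Hkn; exact Hs0).
      destruct (Rlt_or_le 0 (k s)) as [A|A].
      + assert (0 < k s0) by nra. rewrite !Rabs_pos_eq by lra. field. split; lra.
      + assert (k s < 0) by (destruct A; [auto|congruence]).
        assert (k s0 < 0) by nra. rewrite !Rabs_left by lra. field. split; lra. }
    exists (vscale (c s0) d), phi. split.
    + rewrite (vnorm_scale_unit _ _ (dot1_of_norm _ Hd)).
      assert (E := Hc2 s0 Hs0).
      destruct (Rle_or_lt 0 (c s0)); [rewrite Rabs_pos_eq by lra | rewrite Rabs_left by lra]; nra.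
    + intros s Hs. rewrite (HN s Hs), (Hsg s Hs).
      rewrite <- (Hdp s Hs). assert (E := Hc2 s0 Hs0).
      destruct (U s) as [[x y] z], d as [[p q] r].
      unfold dot, vscale, vx, vy, vz in *; simpl in *.
      transitivity ((c s0 * c s0) * (x * p + y * q + z * r)); [ring | rewrite E; ring].
Qed.
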